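(* For any positive integer $n$, $$\frac{3}{2}\sum_{k=1}^{n}\frac{1}{k}\binom{2k}{k}=\sum_{k=1}^{n}\frac{1}{k}\binom{n+k}{k}+H_n(1),$$ $$\sum_{k=1}^n\binom{2k}{k}\left(\frac{3H_k(1)}{2k}-\frac{1}{k^2}\right)=\sum_{k=1}^{n}\binom{n+k}{k}\frac{H_k(1)}{k}-H_n(2),$$ $$\sum_{k=1}^n\binom{2k}{k}\left(\frac{3H_k(2)}{k}-\frac{1}{2k^3}\right)=\sum_{k=1}^{n}\binom{n+k}{k}\frac{H_k(2)+H_n(2)}{k}+H_n(2)H_n(1)-H_n(1,2).$$
   Context: For positive integers $s$, $H_n(s)=\sum_{j=1}^n j^{-s}$, and $H_n(1,2)=\sum_{1\le i<j\le n}\frac{1}{i\,j^2}$. *)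

(* Defs.v *)
From mathcomp Require Import all_boot all_order all_algebra.
Set Implicit Arguments. Unset Strict Implicit. Unset Printing Implicit Defensive.
Import Order.TTheory GRing.Theory Num.Theory.
Local Open Scope ring_scope.

Definition H (n s : nat) : rat := \sum_(1 <= j < n.+1) (j%:R ^+ s)^-1.

Definition H12 (n : nat) : rat :=
  \sum_(1 <= j < n.+1) \sum_(1 <= i < j) (i%:R * j%:R ^+ 2)^-1.

(* Main.v *)
Require Import Defs.
From mathcomp Require Import all_boot all_order all_algebra.
From mathcomp Require Import zify ring lra.
Import Order.TTheory GRing.Theory Num.Theory.
Local Open Scope ring_scope.

Lemma binrel n j : (j.+1 * 'C(n + j.+1, j.+1) = n.+1 * 'C(n + j.+1, j))%N.
Proof. rewrite mul_bin_left; congr (_ * _)%N; lia. Qed.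

Lemma binrelR n j : ('C(n + j.+1, j.+1))%:R = (j.+1%:R)^-1 * (n.+1%:R * ('C(n + j.+1, j))%:R) :> rat.
Proof.
have h := binrel n j; move/(congr1 (fun m => m%:R : rat)): h; rewrite !natrM => <-.
by rewrite mulKf // pnatr_eq0.
Qed.

Lemma nz1 j : (1 + j%:R != 0 :> rat).
Proof. by rewrite addrC natr1 pnatr_eq0. Qed.
Ltac nz := rewrite ?nz1 ?pnatr_eq0 ?andbT //.

Lemma HS n s : H n.+1 s = H n s + (n.+1%:R ^+ s)^-1.
Proof. by rewrite /H big_nat_recr. Qed.

Lemma pascal_sum (u : nat -> rat) n :
  \sum_(1 <= k < n.+2) ('C(n.+1 + k, k))%:R * u k / k%:R =
  \sum_(1 <= k < n.+1) ('C(n + k, k))%:R * u k / k%:R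
  + ('C(n.+1 + n.+1, n.+1))%:R * u n.+1 / n.+1%:R
  + (n.+1%:R)^-1 * \sum_(1 <= k < n.+1) ('C(n + k, k))%:R * u k.
Proof.
rewrite big_nat_recr //= [RHS]addrAC; congr (_ + _).
rewrite big_distrr -big_split; apply: eq_big_nat => k /andP[k1 _].
case: k k1 => // j _.
rewrite addSn binS natrD binrelR.
rewrite /=; field.
nz.
Qed.

Lemma hockey a m : \sum_(1 <= k < m.+1) ('C(a + k, k))%:R = ('C(a + m.+1, m))%:R - 1 :> rat.
Proof.
elim: m => [|m IH]; first by rewrite big_geq // bin0 subrr.
rewrite big_nat_recr //= IH [in RHS]addnS binS natrD; ring.
Qed.

Lemma closedB a m : \sum_(1 <= k < m.+1) ('C(a + k, k))%:R * H k 1 =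
  ('C(a + m.+1, m))%:R * H m 1 - (('C(a + m.+1, m))%:R - 1) / a.+1%:R.
Proof.
elim: m => [|m IH]; first by rewrite big_geq // /H big_geq // bin0 subrr mul0r mulr0 subr0.
rewrite big_nat_recr //= IH [in RHS]addnS binS natrD !HS.
rewrite binrelR; field.
nz.
Qed.

Lemma closedC a m : \sum_(1 <= k < m.+1) ('C(a + k, k))%:R * H k 2 =
  ('C(a + m.+1, m))%:R * H m 2 - (a.+1%:R)^-1 * \sum_(1 <= k < m.+1) ('C(a + k, k))%:R / k%:R.
Proof.
elim: m => [|m IH]; first by rewrite !big_geq // /H big_geq // bin0 !mulr0 subr0.
rewrite big_nat_recr //= IH [in RHS]big_nat_recr //= [in RHS]addnS binS natrD !HS.
rewrite binrelR; field.
nz.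
Qed.

Lemma central n : ('C(n.+1 + n.+1, n.+1))%:R = 2 * ('C(n + n.+1, n))%:R :> rat.
Proof.
have e : (n.+1 + n.+1 = (n + n.+1).+1)%N by lia.
rewrite e binS.
have -> : 'C(n + n.+1, n.+1) = 'C(n + n.+1, n).
  have hl : (n <= n + n.+1)%N by lia. by rewrite -[in RHS](bin_sub hl) addKn.
by rewrite natrD mulr2n mulrDl mul1r.
Qed.

Lemma twok k : (2 * k = k + k)%N. Proof. lia. Qed.

Lemma id1 n : 3%:R / 2%:R * \sum_(1 <= k < n.+1) ('C(2 * k, k))%:R / k%:R
        = \sum_(1 <= k < n.+1) ('C(n + k, k))%:R / k%:R + H n 1.
Proof.
elim: n => [|n IH]; first by rewrite !big_geq // /H big_geq // mulr0 addr0.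
have E m : \sum_(1 <= k < m.+1) ('C(m + k, k))%:R / k%:R
   = \sum_(1 <= k < m.+1) ('C(m + k, k))%:R * (fun _ => 1 : rat) k / k%:R.
  by apply: eq_bigr => k _; rewrite mulr1.
rewrite E (pascal_sum (fun _ => 1)) -E /= big_nat_recr //= mulrDr IH.
have E2 : \sum_(1<=k<n.+1) ('C(n+k,k))%:R * 1 = \sum_(1<=k<n.+1) ('C(n+k,k))%:R :> rat.
  by apply: eq_bigr => k _; rewrite mulr1.
rewrite E2 mulr1 hockey twok central HS; field.
nz.
Qed.

Lemma id2 n : \sum_(1 <= k < n.+1) ('C(2 * k, k))%:R *
          (3%:R * H k 1 / (2%:R * k%:R) - (k%:R ^+ 2)^-1)
        = \sum_(1 <= k < n.+1) ('C(n + k, k))%:R * H k 1 / k%:R - H n 2.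
Proof.
elim: n => [|n IH]; first by rewrite !big_geq // /H big_geq // subr0.
rewrite (pascal_sum (fun k => H k 1)) /= big_nat_recr //= IH closedB twok central !HS.
field; nz.
Qed.

Lemma H12S n : H12 n.+1 = H12 n + (n.+1%:R ^+ 2)^-1 * H n 1.
Proof.
rewrite /H12 big_nat_recr //=; congr (_ + _).
rewrite /H big_distrr; apply: eq_bigr => i _; by rewrite invfM expr1 mulrC.
Qed.

Lemma id3 n : \sum_(1 <= k < n.+1) ('C(2 * k, k))%:R *
          (3%:R * H k 2 / k%:R - (2%:R * k%:R ^+ 3)^-1)
        = \sum_(1 <= k < n.+1) ('C(n + k, k))%:R * H k 2 / k%:R
          + H n 2 * (3%:R / 2%:R * \sum_(1 <= k < n.+1) ('C(2 * k, k))%:R / k%:R) - H12 n.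
Proof.
elim: n => [|n IH]; first by rewrite !big_geq // /H12 big_geq // ?mulr0 ?mul0r ?subr0 ?addr0.
rewrite (pascal_sum (fun k => H k 2)) /= big_nat_recr //= IH closedC.
have R1 := id1 n.
have -> : \sum_(1 <= k < n.+1) ('C(n + k, k))%:R / k%:R = 3%:R / 2%:R * \sum_(1 <= k < n.+1) ('C(2 * k, k))%:R / k%:R - H n 1.
  by rewrite R1 addrK.
rewrite [X in H n.+1 2 * (_ * X)]big_nat_recr //= H12S twok central !HS.
field; nz.
Qed.

Theorem mainTheorem3 (n : nat) (hn : (0 < n)%N) :
  [/\ 3%:R / 2%:R * \sum_(1 <= k < n.+1) ('C(2 * k, k))%:R / k%:R
        = \sum_(1 <= k < n.+1) ('C(n + k, k))%:R / k%:R + H n 1 ,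
      \sum_(1 <= k < n.+1) ('C(2 * k, k))%:R *
          (3%:R * H k 1 / (2%:R * k%:R) - (k%:R ^+ 2)^-1)
        = \sum_(1 <= k < n.+1) ('C(n + k, k))%:R * H k 1 / k%:R - H n 2
    & \sum_(1 <= k < n.+1) ('C(2 * k, k))%:R *
          (3%:R * H k 2 / k%:R - (2%:R * k%:R ^+ 3)^-1)
        = \sum_(1 <= k < n.+1) ('C(n + k, k))%:R * (H k 2 + H n 2) / k%:R
          + H n 2 * H n 1 - H12 n ].
Proof.
split; [exact: id1 | exact: id2 |].
rewrite id3 id1.
have -> : \sum_(1 <= k < n.+1) ('C(n + k, k))%:R * (H k 2 + H n 2) / k%:R
   = \sum_(1 <= k < n.+1) ('C(n + k, k))%:R * H k 2 / k%:R
     + H n 2 * \sum_(1 <= k < n.+1) ('C(n + k, k))%:R / k%:R.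
  rewrite big_distrr -big_split; apply: eq_bigr => k _ /=.
  by rewrite mulrDr mulrDl mulrCA mulrA.
by rewrite mulrDr addrA.
Qed.
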